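(* Let $\mathcal E$ be a nest on a complex Banach space $X$, let $\mathcal J$ be a $\mathcal T(\mathcal E)$-bimodule and let $\mathcal J_0$ be the set of finite rank operators in $\mathcal J$. Then $\mathcal J\subseteq\overline{\mathcal J_0}^{\mathrm{SOT}}\subseteq\overline{\mathcal J_0}^{\mathrm{WOT}}$, where the closures are in the strong and weak operator topologies respectively.
   Context: A nest $\mathcal E$ on $X$ is a family of closed linear subspaces of $X$, totally ordered by inclusion, containing $\{0\}$ and $X$, closed under arbitrary meets (intersections) and joins (norm-closed linear spans of unions). $\mathcal T(\mathcal E)=\{T\in\mathcal B(X): TE\subseteq E\ \forall E\in\mathcal E\}$. A $\mathcal T(\mathcal E)$-bimodule is a linear subspace $\mathcal J\subseteq\mathcal B(X)$ with $\mathcal T(\mathcal E)\mathcal J\subseteq\mathcal J$ and $\mathcal J\mathcal T(\mathcal E)\subseteq\mathcal J$. *)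

(* Defs.v *)
From HB Require Import structures.
From mathcomp Require Import all_boot all_order all_algebra.
From mathcomp Require Import complex.
From mathcomp Require Import all_classical all_reals all_analysis.
Import numFieldNormedType.Exports.
Import Order.TTheory GRing.Theory Num.Theory.

Set Implicit Arguments.
Unset Strict Implicit.
Unset Printing Implicit Defensive.

Local Open Scope classical_set_scope.
Local Open Scope ring_scope.

Section NestDefs.
Variables (R : realType) (X : completeNormedModType R[i]).

Definition is_subspace (E : set X) : Prop :=
  E 0 /\ forall (a : R[i]) (x y : X), E x -> E y -> E (a *: x + y).

Definition closed_subspace (E : set X) : Prop := is_subspace E /\ closed E.

Definition lin_span (A : set X) : set X :=
  [set x | exists (n : nat) (a : 'I_n -> R[i]) (v : 'I_n -> X),
      (forall i, A (v i)) /\ x = \sum_(i < n) a i *: v i].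

Definition nest_meet (F : set (set X)) : set X := \bigcap_(E in F) E.
Definition nest_join (F : set (set X)) : set X :=
  closure (lin_span (\bigcup_(E in F) E)).

Definition nest (N : set (set X)) : Prop :=
  [/\ (forall E, N E -> closed_subspace E),
      (forall E F, N E -> N F -> E `<=` F \/ F `<=` E),
      N [set 0], N setT &
      (forall F, F `<=` N -> N (nest_meet F) /\ N (nest_join F))].

Definition bounded_op (T : X -> X) : Prop :=
  (forall (a : R[i]) (x y : X), T (a *: x + y) = a *: T x + T y) /\ continuous T.

Definition bounded_functional (f : X -> R[i]) : Prop :=
  (forall (a : R[i]) (x y : X), f (a *: x + y) = a * f x + f y) /\
  continuous (f : X -> (R[i] : numFieldType)).

Definition nest_alg (N : set (set X)) : set (X -> X) :=
  [set T | bounded_op T /\ forall E, N E -> forall x, E x -> E (T x)].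

Definition bimodule (N : set (set X)) (J : set (X -> X)) : Prop :=
  [/\ (forall T, J T -> bounded_op T),
      J (fun _ => 0),
      (forall (a : R[i]) S T, J S -> J T -> J (fun x => a *: S x + T x)) &
      (forall A S, nest_alg N A -> J S -> J (A \o S) /\ J (S \o A))].

Definition finite_rank (T : X -> X) : Prop :=
  bounded_op T /\
  exists (n : nat) (v : 'I_n -> X),
    forall x, exists a : 'I_n -> R[i], T x = \sum_(i < n) a i *: v i.

Definition sot_closure (S : set (X -> X)) : set (X -> X) :=
  [set T | bounded_op T /\
     forall (n : nat) (x : 'I_n -> X) (e : R[i]), 0 < e ->
       exists U, S U /\ forall i, `|T (x i) - U (x i)| < e].

Definition wot_closure (S : set (X -> X)) : set (X -> X) :=
  [set T | bounded_op T /\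
     forall (n m : nat) (x : 'I_n -> X) (f : 'I_m -> X -> R[i]) (e : R[i]),
       (forall j, bounded_functional (f j)) -> 0 < e ->
       exists U, S U /\ forall i j, `|f j (T (x i)) - f j (U (x i))| < e].

End NestDefs.

(* Main.v *)
Require Import Defs.
From HB Require Import structures.
From mathcomp Require Import all_boot all_order all_algebra.
From mathcomp Require Import complex.
From mathcomp Require Import all_classical all_reals all_analysis.
From mathcomp Require Import ring lra.
Import numFieldNormedType.Exports.
Import Order.TTheory GRing.Theory Num.Theory.
Set Implicit Arguments.
Unset Strict Implicit.
Unset Printing Implicit Defensive.
Local Open Scope classical_set_scope.
Local Open Scope ring_scope.
Local Open Scope complex_scope.

Section Basic.
Variable R : realType.

Lemma normCR (r : R) : `|r%:C| = `|r|%:C.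
Proof. by rewrite normc_def /= expr0n /= addr0 sqrtr_sqr. Qed.

Lemma rCD (a b : R) : (a + b)%:C = a%:C + b%:C.
Proof. by apply/eqP; simpc. Qed.
Lemma rCM (a b : R) : (a * b)%:C = a%:C * b%:C.
Proof. by apply/eqP; simpc. Qed.
Lemma rCN (a : R) : (- a)%:C = - a%:C.
Proof. by apply/eqP; simpc. Qed.
Lemma rCB (a b : R) : (a - b)%:C = a%:C - b%:C.
Proof. by apply/eqP; simpc. Qed.
Lemma rC0 : (0 : R)%:C = 0. Proof. by []. Qed.
Lemma rC1 : (1 : R)%:C = 1. Proof. by []. Qed.
Lemma rCV (a : R) : (a^-1)%:C = (a%:C)^-1.
Proof. exact: fmorphV. Qed.

Lemma realC (z : R[i]) : z \is Num.real -> z = (complex.Re z)%:C.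
Proof. by move=> /RRe_real. Qed.

Variable X : normedModType R[i].

Definition nr (x : X) : R := complex.Re `|x|.

Lemma nrE x : `|x| = (nr x)%:C.
Proof. by rewrite /nr RRe_real // normr_real. Qed.

Lemma nr_ge0 x : 0 <= nr x.
Proof. by rewrite -ler0c -nrE. Qed.

Lemma nrD x y : nr (x + y) <= nr x + nr y.
Proof. by rewrite -lecR rCD -!nrE ler_normD. Qed.

Lemma nrZ (a : R) x : nr (a%:C *: x) = `|a| * nr x.
Proof. by apply: complexI; rewrite rCM -!nrE normrZ normCR. Qed.

Lemma nrN x : nr (- x) = nr x.
Proof. by rewrite /nr normrN. Qed.

End Basic.

Section RealHB.
Variables (R : realType) (X : normedModType R[i]) (c : R) (c0 : 0 <= c).
Let p (x : X) := c * nr x.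

Definition goodG (G : set (X * R)) : Prop :=
  [/\ (forall x r s, G (x, r) -> G (x, s) -> r = s),
      G (0, 0),
      (forall (a : R) x y r s, G (x, r) -> G (y, s) -> G (a%:C *: x + y, a * r + s)) &
      (forall x r, G (x, r) -> r <= p x)].

Lemma goodZ G a x r : goodG G -> G (x, r) -> G (a%:C *: x, a * r).
Proof.
case=> _ G0 Glin _ Gx; have := Glin a _ _ _ _ Gx G0.
by rewrite addr0 addr0.
Qed.

Lemma p_hom (t : R) x : 0 < t -> p (t%:C *: x) = t * p x.
Proof. by move=> t0; rewrite /p nrZ gtr0_norm // mulrCA. Qed.

Lemma extend G x0 : goodG G -> (forall r, ~ G (x0, r)) ->
  exists G', goodG G' /\ G `<` G'.
Proof.
move=> gG nx0; have [Gf G0 Glin Gb] := gG.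
pose A := [set t | exists z r, G (z, r) /\ t = r - p (z - x0)].
have AB z r t : G (z, r) -> A t -> t <= p (z + x0) - r.
  move=> Gzr [z' [r' [Gz'r' ->]]].
  have := Gb _ _ (Glin 1 _ _ _ _ Gzr Gz'r'); rewrite scale1r mul1r => H.
  have E : z + z' = (z + x0) + (z' - x0) by rewrite addrACA subrr addr0.
  rewrite E in H.
  have := nrD (z + x0) (z' - x0); rewrite /p in H *.
  move=> /(ler_wpM2l c0); rewrite mulrDr; lra.
have An0 : A !=set0 by exists (0 - p (0 - x0)); exists 0, 0.
have Aub : has_ubound A by exists (p (0 + x0) - 0) => t /(AB _ _ _ G0).
pose al := sup A.
have al1 t : A t -> t <= al by move=> At; apply: sup_upper_bound => //; split.
have al2 z r : G (z, r) -> al <= p (z + x0) - r.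
  by move=> Gzr; apply: ge_sup => // t /(AB _ _ _ Gzr).
pose G' := [set q | exists z r t, G (z, r) /\ q = (z + t%:C *: x0, r + t * al)].
have GG' : G `<=` G'.
  by move=> [z r] Gzr; exists z, r, 0; split => //; rewrite mul0r scale0r !addr0.
exists G'; split; last first.
  split => //; move=> /(_ (x0, al)) H.
  have : G' (x0, al) by exists 0, 0, 1; rewrite scale1r mul1r !add0r.
  by move=> /H /nx0.
split.
- move=> x r s [z1 [r1 [t1 [G1 [-> ->]]]]] [z2 [r2 [t2 [G2 []]]]].
  have [<-|tne] := eqVneq t1 t2.
    by move=> /addIr Ez ->; rewrite Ez in G1; rewrite (Gf _ _ _ G1 G2).
  move=> E _; exfalso.
  have E2 : (t1 - t2)%:C *: x0 = z2 - z1.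
    by rewrite rCB scalerBl -[t1%:C *: x0](addKr z1) E addrA addrK addrC.
  have Gd := Glin (-1) _ _ _ _ G1 G2.
  have := goodZ ((t1 - t2)^-1) gG Gd.
  rewrite rCN scaleN1r [- z1 + z2]addrC -E2 scalerA -rCM mulVf ?subr_eq0 // scale1r.
  exact: nx0.
- by exists 0, 0, 0; rewrite scale0r mul0r !addr0.
- move=> a x y r s [z1 [r1 [t1 [G1 [-> ->]]]]] [z2 [r2 [t2 [G2 [-> ->]]]]].
  exists (a%:C *: z1 + z2), (a * r1 + r2), (a * t1 + t2); split; first exact: Glin.
  congr (_, _).
    by rewrite scalerDr scalerA -rCM rCD scalerDl addrACA.
  ring.
- move=> x r [z [r' [t [Gz [-> ->]]]]].
  have [t0|t0|->] := ltgtP t 0; last by rewrite mul0r scale0r !addr0; exact: Gb.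
  + pose s := - t; have s0 : 0 < s by rewrite oppr_gt0.
    have Gs := goodZ (s^-1) gG Gz.
    have := al1 _ (ex_intro _ _ (ex_intro _ _ (conj Gs erefl))).
    have -> : s^-1%:C *: z - x0 = s^-1%:C *: (z + t%:C *: x0).
      have st : s^-1 * t = -1 by rewrite /s invrN mulNr mulVf ?ltr0_neq0.
      by rewrite scalerDr scalerA -rCM st rCN scaleN1r.
    rewrite p_hom ?invr_gt0 // => H.
    have := ler_wpM2l (ltW s0) H.
    rewrite mulrBr !mulrA mulfV ?gt_eqF // !mul1r /s /p mulNr; lra.
  + have Gs := goodZ (t^-1) gG Gz.
    have := al2 _ _ Gs.
    have -> : t^-1%:C *: z + x0 = t^-1%:C *: (z + t%:C *: x0).
      by rewrite scalerDr scalerA -rCM mulVf ?gt_eqF // scale1r.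
    rewrite p_hom ?invr_gt0 // => H.
    have := ler_wpM2l (ltW t0) H.
    rewrite mulrBr !mulrA mulfV ?gt_eqF // !mul1r /p; lra.
Qed.

Lemma HBreal G0 : goodG G0 -> exists u : X -> R,
  [/\ (forall a x y, u (a%:C *: x + y) = a * u x + u y),
      (forall x, u x <= p x) & (forall x r, G0 (x, r) -> u x = r)].
Proof.
move=> gG0.
pose P := fun G : set (X * R) => G = set0 \/ (goodG G /\ G0 `<=` G).
have [A [PA Amax]] : exists A, P A /\ forall B, A `<` B -> ~ P B.
  apply: Zorn_bigcup => F FP Ftot.
  case: (pselect (exists q, (\bigcup_(B in F) B) q)) => [[q0 [B0 FB0 B0q]]|nU]; last first.
    by left; apply/seteqP; split => // q Uq; apply: nU; exists q.
  have gF B q : F B -> B q -> goodG B /\ G0 `<=` B.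
    move=> FB Bq; case: (FP B FB) => // B00.
    by rewrite B00 in Bq.
  have [gB0 G0B0] := gF _ _ FB0 B0q.
  right; split; last by move=> q /G0B0 ?; exists B0.
  split.
  - move=> x r s [B1 FB1 B1r] [B2 FB2 B2s].
    have [g1 _] := gF _ _ FB1 B1r; have [g2 _] := gF _ _ FB2 B2s.
    case: (Ftot _ _ FB1 FB2) => [/(_ _ B1r) B2r|/(_ _ B2s) B1s].
      by case: g2 => Gf _ _ _; apply: Gf B2r B2s.
    by case: g1 => Gf _ _ _; apply: Gf B1r B1s.
  - by exists B0 => //; apply: G0B0; case: gG0.
  - move=> a x y r s [B1 FB1 B1r] [B2 FB2 B2s].
    have [g1 _] := gF _ _ FB1 B1r; have [g2 _] := gF _ _ FB2 B2s.
    case: (Ftot _ _ FB1 FB2) => [/(_ _ B1r) B2r|/(_ _ B2s) B1s].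
      by exists B2 => //; case: g2 => _ _ Gl _; apply: Gl B2r B2s.
    by exists B1 => //; case: g1 => _ _ Gl _; apply: Gl B1r B1s.
  - move=> x r [B1 FB1 B1r]; have [g1 _] := gF _ _ FB1 B1r.
    by case: g1 => _ _ _ Gb; apply: Gb.
have [gA G0A] : goodG A /\ G0 `<=` A.
  case: PA => // A0; exfalso; apply: (Amax G0); last by right; split.
  rewrite A0; split; first by move=> ?.
  by case: gG0 => _ G00 _ _ /(_ _ G00).
have tot x : exists r, A (x, r).
  apply: contrapT => nx.
  have nA : forall r, ~ A (x, r) by move=> r Ar; apply: nx; exists r.
  have [G' [gG' AG']] := extend gA nA.
  by apply: (Amax G' AG'); right; split => //; apply: subset_trans (properW AG').
have [u Au] := choice tot.
have [Af _ Al Ab] := gA.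
exists u; split.
- move=> a x y; apply: (Af (a%:C *: x + y)); first exact: Au.
  exact: Al.
- by move=> x; apply: Ab.
- by move=> x r /G0A Ar; apply: (Af x).
Qed.
End RealHB.

Section Sep.
Variables (R : realType) (X : completeNormedModType R[i]).

Lemma bounded_cont (f : X -> R[i]) (k : R[i]) :
  (forall x y, f (x - y) = f x - f y) -> (forall x, `|f x| <= k * `|x|) ->
  0 < k -> continuous (f : X -> (R[i] : numFieldType)).
Proof.
move=> fB fb k0 x; apply/cvgrPdist_lt => e e0.
have : (fun z : X => z) @ x --> x by [].
move=> /cvgrPdist_lt /(_ (e / k)); rewrite divr_gt0 // => /(_ isT).
apply: filterS => z /= H.
rewrite -fB; apply: (le_lt_trans (fb _)).
by rewrite -ltr_pdivlMl // mulrC.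
Qed.


Lemma closed_dist (C : set X) (y : X) : closed C -> ~ C y ->
  exists2 e : R[i], 0 < e & forall z, C z -> e <= `|y - z|.
Proof.
move=> Ccl nCy.
have : ~ closure C y by move=> /Ccl.
move=> /existsNP [B] /not_implyP [/nbhs_ballP [e e0 eB] nCB].
exists e => // z Cz.
have nyz : ~ (`|y - z| < e).
  move=> yz; apply: nCB; exists z; split => //; apply: eB.
  by rewrite -ball_normE /=.
by rewrite (real_leNgt (gtr0_real e0) (normr_real _)); apply/negP.
Qed.


Lemma normi : `|'i : R[i]| = 1.
Proof. by rewrite normc_def /= expr0n expr1n add0r sqrtr1. Qed.
Lemma reL (t : R) (a b : R[i]) :
  complex.Re (t%:C * a + b) = t * complex.Re a + complex.Re b.
Proof. by case: a => ? ?; case: b => ? ? /=; ring. Qed.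

Lemma HBsep (C : set X) (y : X) : is_subspace C -> closed C -> ~ C y ->
  exists f : X -> R[i], bounded_functional f /\ (forall z, C z -> f z = 0) /\ f y = 1.
Proof.
move=> [C0 Clin] Ccl nCy.
have [e e0 He] := closed_dist Ccl nCy.
have Cs a z : C z -> C (a *: z) by move=> Cz; have := Clin a _ _ Cz C0; rewrite addr0.
have CN z : C z -> C (- z) by move=> /(Cs (-1)); rewrite scaleN1r.
pose d := complex.Re e.
have ed : e = d%:C by rewrite /d RRe_real ?gtr0_real.
have d0 : 0 < d by rewrite -ltcR -ed.
pose G0 := [set q : X * R | exists z a, C z /\ q = (z + a *: y, complex.Re a)].
have uniq z1 a1 z2 a2 : C z1 -> C z2 -> z1 + a1 *: y = z2 + a2 *: y -> a1 = a2.
  move=> C1 C2 E; apply: contrapT => ne; apply: nCy.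
  have E2 : (a1 - a2) *: y = z2 - z1.
    by rewrite scalerBl -[a1 *: y](addKr z1) E addrA addrK addrC.
  have Cd : C (z2 - z1) by have := Clin 1 _ _ C2 (CN _ C1); rewrite scale1r.
  have := Cs ((a1 - a2)^-1) _ Cd; rewrite -E2 scalerA mulVf ?scale1r //.
  by rewrite subr_eq0; apply/eqP.
have gG0 : goodG (d^-1) G0.
  split.
  - move=> x r s [z1 [a1 [C1 [-> ->]]]] [z2 [a2 [C2 [E ->]]]].
    by rewrite (uniq _ _ _ _ C1 C2 E).
  - by exists 0, 0; rewrite scale0r addr0.
  - move=> t x x' r s [z1 [a1 [C1 [-> ->]]]] [z2 [a2 [C2 [-> ->]]]].
    exists (t%:C *: z1 + z2), (t%:C * a1 + a2); split; first exact: Clin.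
    congr (_, _); last by rewrite reL.
    by rewrite scalerDr scalerA scalerDl addrACA.
  - move=> x r [z [a [Cz [-> ->]]]].
    have [->|a0] := eqVneq a 0.
      by rewrite /= mulr_ge0 ?invr_ge0 ?nr_ge0 ?ltW.
    have H1 : e <= `|a^-1 *: z + y|.
      by have := He _ (CN _ (Cs a^-1 _ Cz)); rewrite opprK addrC.
    have H2 : z + a *: y = a *: (a^-1 *: z + y).
      by rewrite scalerDr scalerA mulfV // scale1r.
    have H3 : `|a| * e <= `|z + a *: y| by rewrite H2 normrZ ler_wpM2l.
    have H4 : (complex.Re a)%:C <= `|a|.
      apply: le_trans (normc_ge_Re a); rewrite lecR; exact: ler_norm.
    have H5 : (d * complex.Re a)%:C <= (nr (z + a *: y))%:C.
      rewrite rCM -nrE; apply: le_trans H3; rewrite mulrC -ed.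
      by apply: ler_wpM2r => //; exact: ltW.
    by rewrite ler_pdivlMl // -lecR; move: H5; rewrite lecR.
have di0 : 0 <= d^-1 by rewrite invr_ge0 ltW.
have [u [ulin ub uG]] := HBreal di0 gG0.
have u0 : u 0 = 0.
  have := ulin 1 0 0; rewrite scaler0 addr0 mul1r.
  by move/(congr1 (fun t => t - u 0)); rewrite subrr addrK.
have uD x w : u (x + w) = u x + u w by have := ulin 1 x w; rewrite scale1r mul1r.
have uZ t x : u (t%:C *: x) = t * u x.
  by have := ulin t x 0; rewrite addr0 u0 addr0.
have uN x : u (- x) = - u x by have := uZ (-1) x; rewrite rCN scaleN1r mulN1r.
have ubn x : `|u x| <= d^-1 * nr x.
  rewrite ler_norml ub andbT lerNl -uN; apply: le_trans (ub _) _.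
  by rewrite nrN.
pose f x := (u x)%:C - 'i * (u ('i *: x))%:C.
exists f; split; last split.
- split.
  + move=> a x w; rewrite /f.
    have -> : a *: x + w = (complex.Re a)%:C *: x + ((complex.Im a)%:C *: ('i *: x) + w).
      by rewrite scalerA addrA -scalerDl [_ * 'i]mulrC -complexE.
    have E1 : 'i *: ((complex.Re a)%:C *: x + ((complex.Im a)%:C *: ('i *: x) + w)) =
      (complex.Re a)%:C *: ('i *: x) + ((complex.Im a)%:C *: (- x) + 'i *: w).
      rewrite !scalerDr; congr (_ + (_ + _)); first by rewrite !scalerA mulrC.
      by rewrite scalerN -scaleNr !scalerA mulrAC -expr2 sqr_i mulN1r.
    rewrite E1 !uD !uZ uN.
    apply/eqP; rewrite eq_complex; clear E1; case: a => a1 a2 /=; simpc.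
    by apply/andP; split; apply/eqP; ring.
  + apply: (@bounded_cont f ((2 * d^-1)%:C)).
    * move=> x w; rewrite /f scalerBr -!addrA uD uN uD uN !rCD !rCN; ring.
    * move=> x; rewrite /f; apply: le_trans (ler_normB _ _) _.
      rewrite normrM normi mul1r !normCR nrE -rCD -rCM lecR -mulrA.
      have E : nr ('i *: x) = nr x by rewrite /nr normrZ normi mul1r.
      have := ubn x; have := ubn ('i *: x); rewrite E; lra.
    * by rewrite ltcR mulr_gt0 ?invr_gt0.
- move=> z Cz; rewrite /f.
  have -> : u z = 0.
    by rewrite (uG z (complex.Re 0)) //; exists z, 0; rewrite scale0r addr0.
  have -> : u ('i *: z) = 0.
    by rewrite (uG _ (complex.Re 0)) //; exists ('i *: z), 0; rewrite scale0r addr0; split => //; apply: Cs.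
  by rewrite mulr0 subr0.
- rewrite /f (uG y (complex.Re 1)); last by exists 0, 1; rewrite scale1r add0r.
  rewrite (uG ('i *: y) (complex.Re 'i)); last by exists 0, 'i; rewrite add0r.
  by rewrite /= mulr0 subr0.
Qed.

End Sep.

Section Span.
Variables (R : realType) (X : completeNormedModType R[i]).

Definition addv (D : set X) (v : X) : set X :=
  [set x | exists d a, D d /\ x = d + a *: v].

Lemma sub_scale (D : set X) a z : is_subspace D -> D z -> D (a *: z).
Proof. by case=> D0 Dl Dz; have := Dl a _ _ Dz D0; rewrite addr0. Qed.

Lemma sub_add (D : set X) z w : is_subspace D -> D z -> D w -> D (z + w).
Proof. by case=> D0 Dl Dz Dw; have := Dl 1 _ _ Dz Dw; rewrite scale1r. Qed.

Lemma sub_opp (D : set X) z : is_subspace D -> D z -> D (- z).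
Proof. by move=> sD /(sub_scale (-1) sD); rewrite scaleN1r. Qed.

Lemma addv_sub D v : is_subspace D -> is_subspace (addv D v).
Proof.
move=> sD; split; first by exists 0, 0; rewrite scale0r addr0; split => //; case: sD.
move=> a x y [d1 [a1 [D1 ->]]] [d2 [a2 [D2 ->]]].
exists (a *: d1 + d2), (a * a1 + a2); split; first by case: sD => _; apply.
by rewrite scalerDr scalerA scalerDl addrACA.
Qed.

Lemma addv_closed D v : is_subspace D -> closed D -> closed (addv D v).
Proof.
move=> sD cD; case: (pselect (D v)) => Dv.
  suff -> : addv D v = D by [].
  apply/seteqP; split => x.
    by case=> d [a [Dd ->]]; apply: sub_add => //; apply: sub_scale.
  by move=> Dx; exists x, 0; rewrite scale0r addr0.
have [g [[glin gc] [gD gv]]] := HBsep sD cD Dv.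
have gB x y : g (x - y) = g x - g y.
  by have := glin (-1) y x; rewrite scaleN1r mulN1r addrC [- g y + _]addrC.
suff -> : addv D v = (fun x => x - g x *: v) @^-1` D.
  apply: preimage_closed => // x _.
  apply: cvgB; first exact: cvg_id.
  by apply: continuousZr_tmp; apply: gc.
apply/seteqP; split => x /=.
  case=> d [a [Dd ->]].
  have -> : g (d + a *: v) = a.
    by rewrite addrC glin (gD _ Dd) gv mulr1 addr0.
  by rewrite addrK.
move=> H; exists (x - g x *: v), (g x); split => //.
by rewrite subrK.
Qed.


Definition kspan (K : set X) n (w : 'I_n -> X) : set X :=
  [set x | exists k (a : 'I_n -> R[i]), K k /\ x = k + \sum_i a i *: w i].

Lemma kspan0 K (w : 'I_0 -> X) : kspan K w = K.
Proof.
apply/seteqP; split => x.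
  by case=> k [a [Kk ->]]; rewrite big_ord0 addr0.
by move=> Kx; exists x, (fun _ => 0); rewrite big_ord0 addr0.
Qed.

Lemma kspanS K n (w : 'I_n.+1 -> X) :
  kspan K w = addv (kspan K (fun i => w (lift ord0 i))) (w ord0).
Proof.
apply/seteqP; split => x.
  case=> k [a [Kk ->]]; rewrite big_ord_recl.
  exists (k + \sum_(i < n) a (lift ord0 i) *: w (lift ord0 i)), (a ord0); split.
    by exists k, (fun i => a (lift ord0 i)).
  by rewrite addrAC addrA.
case=> d [a0 [[k [a [Kk ->]]] ->]].
exists k, (fun i => match unlift ord0 i with Some j => a j | None => a0 end).
split => //; rewrite big_ord_recl unlift_none.
rewrite addrAC addrA; congr (_ + _ + _).
by apply: eq_bigr => i _; rewrite liftK.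
Qed.

Lemma kspan_closed K n (w : 'I_n -> X) : is_subspace K -> closed K ->
  is_subspace (kspan K w) /\ closed (kspan K w).
Proof.
elim: n w => [|n IH] w sK cK; first by rewrite kspan0.
rewrite kspanS; have [s c] := IH (fun i => w (lift ord0 i)) sK cK.
by split; [apply: addv_sub | apply: addv_closed].
Qed.

Lemma sep_span K n (w : 'I_n -> X) y : is_subspace K -> closed K -> ~ kspan K w y ->
  exists f : X -> R[i], [/\ bounded_functional f, (forall z, K z -> f z = 0),
     (forall i, f (w i) = 0) & f y = 1].
Proof.
move=> sK cK nKy; have [s c] := kspan_closed w sK cK.
have [f [bf [fK fy]]] := HBsep s c nKy.
exists f; split => //.
  by move=> z Kz; apply: fK; exists z, (fun _ => 0); rewrite big1 ?addr0 // => i; rewrite scale0r.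
move=> i; apply: fK; exists 0, (fun j => if j == i then 1 else 0); split; first by case: sK.
rewrite add0r (bigD1 i) //= eqxx scale1r big1 ?addr0 // => j /negbTE ->.
by rewrite scale0r.
Qed.

End Span.

Local Close Scope complex_scope.

Definition ext {T : Type} (v : T) n (y : 'I_n -> T) (i : 'I_n.+1) : T :=
  match unlift ord0 i with Some j => y j | None => v end.
Lemma ext0 T (v : T) n (y : 'I_n -> T) : ext v y ord0 = v.
Proof. by rewrite /ext unlift_none. Qed.
Lemma extS T (v : T) n (y : 'I_n -> T) j : ext v y (lift ord0 j) = y j.
Proof. by rewrite /ext liftK. Qed.

Section Nest.
Variables (R : realType) (X : completeNormedModType R[i]) (N : set (set X)).
Hypothesis nN : nest N.

Lemma sub_sum (D : set X) n (F : 'I_n -> X) : is_subspace D ->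
  (forall i, D (F i)) -> D (\sum_i F i).
Proof.
move=> sD DF; apply: (big_ind D); [by case: sD | | by []].
by move=> x y; apply: sub_add.
Qed.

Lemma sum_ext n (b : 'I_n.+1 -> R[i]) (v : X) (y : 'I_n -> X) :
  \sum_i b i *: ext v y i = b ord0 *: v + \sum_j b (lift ord0 j) *: y j.
Proof.
by rewrite big_ord_recl ext0; congr (_ + _); apply: eq_bigr => j _; rewrite extS.
Qed.

Lemma nest_sub G : N G -> is_subspace G.
Proof. by case: nN => H _ _ _ _ /H []. Qed.
Lemma nest_closed G : N G -> closed G.
Proof. by case: nN => H _ _ _ _ /H []. Qed.
Lemma nest_chain G H : N G -> N H -> G `<=` H \/ H `<=` G.
Proof. by case: nN => _ Hc _ _ _; apply: Hc. Qed.

Lemma chain_max n (v : 'I_n -> X) (P : set (set X)) G0 :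
  P `<=` N -> P G0 -> (forall i, exists G, P G /\ G (v i)) ->
  exists G, P G /\ forall i, G (v i).
Proof.
move=> PN PG0; elim: n v => [|n IH] v Hv; first by exists G0; split => // [[]].
have [G [PG Gv]] := IH (fun i => v (lift ord0 i)) (fun i => Hv _).
have [H [PH Hv0]] := Hv ord0.
case: (nest_chain (PN _ PG) (PN _ PH)) => GH.
  exists H; split => // i; case: (unliftP ord0 i) => [j ->|->] //.
  exact: GH.
exists G; split => // i; case: (unliftP ord0 i) => [j ->|->] //.
exact: GH.
Qed.


Lemma single_vec (y : X) (d : R[i]) : 0 < d -> y != 0 ->
  exists K x, [/\ N K, ~ K y, `|y - x| < d & forall G, N G -> G x \/ G `<=` K].
Proof.
move=> d0 y0.
pose U := [set G | N G /\ ~ G y].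
have UN : U `<=` N by move=> G [].
have NL : N (nest_join U) by case: nN => _ _ _ _ /(_ U UN) [].
case: (pselect (nest_join U y)) => Ly; last first.
  exists (nest_join U), y; split => //; first by rewrite subrr normr0.
  move=> G NG; case: (pselect (G y)) => Gy; [left | right] => // z Gz.
  apply: subset_closure; exists 1%N, (fun _ => 1), (fun _ => z); split.
    by move=> _; exists G.
  by rewrite big_ord1 scale1r.
have [u [[n [a [v [Uv ->]]]] Bu]] := Ly (ball y d) (nbhsx_ballx _ _ d0).
have U0 : U [set 0].
  split; first by case: nN.
  by move=> /= y0'; rewrite y0' eqxx in y0.
have Hv : forall i, exists G, U G /\ G (v i) by move=> i; case: (Uv i) => G UG Gv; exists G.
have [G [UG Gv]] := chain_max UN U0 Hv.
have Gu : G (\sum_i a i *: v i).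
  apply: sub_sum; first exact: nest_sub (UN _ UG).
  by move=> i; apply: sub_scale; [exact: nest_sub (UN _ UG)|].
exists G, (\sum_i a i *: v i); split.
- exact: UN.
- by case: UG.
- by move: Bu; rewrite -ball_normE.
- move=> H NH; case: (nest_chain (UN _ UG) NH) => GH; [left | right] => //.
  exact: GH.
Qed.


Lemma min_level m (y : 'I_m -> X) z : exists a : 'I_m -> R[i],
  forall a' K, N K -> K (z + \sum_i a' i *: y i) -> K (z + \sum_i a i *: y i).
Proof.
elim: m y z => [|m IH] y z.
  by exists (fun _ => 0) => a' K _; rewrite !big_ord0.
have [A HA] := choice (fun c => IH (fun j => y (lift ord0 j)) (z + c *: y ord0)).
pose vc c := z + c *: y ord0 + \sum_j A c j *: y (lift ord0 j).
have key K c1 c2 c : N K -> c1 != c2 -> K (vc c1) -> K (vc c2) -> K (vc c).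
  move=> NK c12 K1 K2; have sK := nest_sub NK.
  pose t := (c - c1) / (c1 - c2).
  apply: (HA c (fun j => A c1 j + t * (A c1 j - A c2 j))) => //.
  rewrite [X in K X](_ : _ = vc c1 + t *: (vc c1 - vc c2)); last first.
    rewrite /vc.
    set S1 := \sum_j A c1 j *: _; set S2 := \sum_j A c2 j *: _; set Y := y ord0.
    have -> : \sum_i (A c1 i + t * (A c1 i - A c2 i)) *: y (lift ord0 i) = S1 + t *: (S1 - S2).
      rewrite /S1 /S2 -sumrB scaler_sumr -big_split /=; apply: eq_bigr => i _.
      by rewrite scalerDl scalerBr !scalerA mulrBr scalerBl.
    have tc : t * (c1 - c2) = c - c1 by rewrite /t divfK // subr_eq0.
    have -> : z + c1 *: Y + S1 - (z + c2 *: Y + S2) = (c1 - c2) *: Y + (S1 - S2).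
      by rewrite scalerBl opprD opprD [LHS]addrACA [X in X + _ = _]addrACA subrr add0r.
    rewrite [X in _ = _ + X]scalerDr scalerA tc scalerBl.
    set T := t *: (S1 - S2).
    rewrite [RHS]addrA !addrA; congr (_ + T).
    by rewrite [RHS]addrAC [z + c1 *: Y + S1]addrAC addrK addrAC.
  apply: sub_add => //; apply: sub_scale => //.
  by apply: sub_add => //; apply: sub_opp.
have [cs Hcs] : exists cs, forall c K, N K -> K (vc c) -> K (vc cs).
  apply: contrapT => nH.
  have H1 : forall cs, exists c K, [/\ N K, K (vc c) & ~ K (vc cs)].
    move=> cs; apply: contrapT => nc; apply: nH; exists cs => c K NK Kc.
    by apply: contrapT => nK; apply: nc; exists c, K.
  have [c1 [K1 [NK1 K1c1 nK10]]] := H1 0.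
  have [c2 [K2 [NK2 K2c2 nK21]]] := H1 c1.
  have c21 : c2 != c1 by apply/eqP => e; rewrite e in K2c2.
  case: (nest_chain NK1 NK2) => K12.
    by apply: nK21; apply: K12.
  by apply: nK10; apply: (key K1 c2 c1 0) => //; apply: K12.
exists (ext cs (A cs)) => a' K NK.
rewrite big_ord_recl addrA => H.
have := Hcs _ _ NK (HA (a' ord0) _ K NK H).
rewrite big_ord_recl ext0 addrA /vc.
by congr (K (_ + _)); apply: eq_bigr => j _; rewrite extS.
Qed.


Definition adapted m (y : 'I_m -> X) := (forall i, y i != 0) /\
  forall K (b : 'I_m -> R[i]), N K -> K (\sum_i b i *: y i) ->
    forall i, b i != 0 -> K (y i).

Lemma adapted_basis n (z : 'I_n -> X) : exists m (y : 'I_m -> X),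
  adapted y /\ forall k, exists c : 'I_m -> R[i], z k = \sum_i c i *: y i.
Proof.
elim: n z => [|n IH] z.
  by exists 0%N, (fun _ => 0); split; [split => [[]//|K b _ _ []] | case].
have [m [y [[y0 ady] Hy]]] := IH (fun k => z (lift ord0 k)).
case: (pselect (exists a : 'I_m -> R[i], z ord0 = \sum_i a i *: y i)) => [[a za]|nz].
  exists m, y; split => // k; case: (unliftP ord0 k) => [j ->|->]; [exact: Hy | by exists a].
have [a Ha] := min_level y (z ord0).
pose v := z ord0 + \sum_i a i *: y i.
have zv : z ord0 = v + \sum_i (- a i) *: y i.
  by rewrite /v -addrA -big_split /= big1 ?addr0 // => i _; rewrite -scalerDl subrr scale0r.
have v0 : v != 0.
  by apply/eqP => e; apply: nz; exists (fun i => - a i); rewrite zv e add0r.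
exists m.+1, (ext v y); split; last first.
  move=> k; case: (unliftP ord0 k) => [j ->|->].
    have [c ->] := Hy j; exists (ext 0 c); rewrite sum_ext ext0 scale0r add0r.
    by apply: eq_bigr => i _; rewrite extS.
  exists (ext 1 (fun i => - a i)); rewrite sum_ext ext0 scale1r zv; congr (_ + _).
  by apply: eq_bigr => i _; rewrite extS.
split.
  by move=> i; case: (unliftP ord0 i) => [j ->|->]; rewrite ?extS ?ext0.
move=> K b NK; rewrite sum_ext => Kb i bi.
have sK := nest_sub NK.
have Kv : b ord0 != 0 -> K v.
  move=> b0n; apply: (Ha (fun j => a j + (b ord0)^-1 * b (lift ord0 j)) K NK).
  rewrite [X in K X](_ : _ = (b ord0)^-1 *: (b ord0 *: v + \sum_j b (lift ord0 j) *: y j)); last first.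
    rewrite scalerDr scalerA mulVf // scale1r scaler_sumr /v -addrA; congr (_ + _).
    by rewrite -big_split; apply: eq_bigr => j _; rewrite scalerDl scalerA.
  exact: sub_scale.
have Kr : K (\sum_j b (lift ord0 j) *: y j).
  have [b00|b0n] := eqVneq (b ord0) 0; first by move: Kb; rewrite b00 scale0r add0r.
  have -> : \sum_j b (lift ord0 j) *: y j = (b ord0 *: v + \sum_j b (lift ord0 j) *: y j) + (- (b ord0 *: v)).
    by rewrite addrAC subrr add0r.
  apply: sub_add => //; apply: sub_opp => //; apply: sub_scale => //; exact: Kv.
case: (unliftP ord0 i) bi => [j ->|->] bi.
  by rewrite extS; apply: (ady K _ NK Kr).
by rewrite ext0; apply: Kv.
Qed.


Definition others m (y : 'I_m -> X) i := fun j => if j == i then 0 else y j.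

Lemma adapted_sep m (y : 'I_m -> X) i K : adapted y -> N K -> ~ K (y i) ->
  ~ kspan K (others y i) (y i).
Proof.
move=> [_ ady] NK nKy [k [b [Kk E]]]; apply: nKy.
pose b' j := if j == i then 1 else - b j.
apply: (ady K b' NK _ i); last by rewrite /b' eqxx oner_neq0.
suff -> : \sum_j b' j *: y j = k by [].
rewrite (bigD1 i) //= /b' eqxx scale1r E.
rewrite (bigD1 i) //= /others eqxx scaler0 add0r.
rewrite addrAC -addrA -big_split /= big1 ?addr0 // => j /negbTE ->.
by rewrite scaleNr addNr.
Qed.

Lemma cont_sum (T : topologicalType) n (g : 'I_n -> T -> X) :
  (forall i, continuous (g i)) -> continuous (fun z => \sum_i g i z).
Proof.
elim: n g => [|n IH] g gc.
  by under eq_fun do rewrite big_ord0; apply: cst_continuous.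
under eq_fun do rewrite big_ord_recl.
move=> x; apply: cvgD; first exact: gc.
exact: (IH (fun i => g (lift ord0 i))).
Qed.


Lemma approx_adapted m (y : 'I_m -> X) (d : R[i]) : 0 < d -> adapted y ->
  exists P : X -> X, [/\ nest_alg N P, finite_rank P & forall i, `|y i - P (y i)| < d].
Proof.
move=> d0 ay.
have H i : exists p : (set X * X) * (X -> R[i]),
  [/\ N p.1.1, `|y i - p.1.2| < d, (forall G, N G -> G p.1.2 \/ G `<=` p.1.1),
     bounded_functional p.2 & (forall z, p.1.1 z -> p.2 z = 0)] /\
     ((forall j, j != i -> p.2 (y j) = 0) /\ p.2 (y i) = 1).
  have [K [x [NK nKy yx Gx]]] := single_vec d0 (ay.1 i).
  have nks := adapted_sep ay NK nKy.
  have [f [bf fK fw fy]] := sep_span (nest_sub NK) (nest_closed NK) nks.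
  exists ((K, x), f); split => //; split => // j ji; have := fw j.
  by rewrite /others (negbTE ji).
have [F HF] := choice H.
pose P z := \sum_i (F i).2 z *: (F i).1.2.
have Plin : forall (a : R[i]) x z, P (a *: x + z) = a *: P x + P z.
  move=> a x z; rewrite /P scaler_sumr -big_split; apply: eq_bigr => i _ /=.
  have [[_ _ _ [fl _] _] _] := HF i.
  by rewrite fl scalerDl scalerA.
have Pc : continuous P.
  apply: cont_sum => i; have [[_ _ _ [_ fc] _] _] := HF i.
  by move=> x; apply: continuousZr_tmp; apply: fc.
have bP : bounded_op P by [].
exists P; split.
- split => // G NG z Gz; apply: sub_sum; first exact: nest_sub.
  move=> i; have [[_ _ HG _ fK] _] := HF i.
  case: (HG G NG) => [Gx|GK]; first by apply: sub_scale => //; exact: nest_sub.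
  by rewrite fK ?scale0r; [case: (nest_sub NG) | apply: GK].
- split => //; exists m, (fun i => (F i).1.2) => z.
  by exists (fun i => (F i).2 z).
- move=> i; rewrite /P (bigD1 i) //=.
  have [[_ yx _ _ _] [_ fy]] := HF i; rewrite fy scale1r big1 ?addr0 //.
  move=> j ji; have [_ [fj _]] := HF j.
  by rewrite fj ?scale0r // eq_sym.
Qed.

End Nest.

Section Main.
Variables (R : realType) (X : completeNormedModType R[i]).

Lemma lin_sum (P : X -> X) : (forall a x z, P (a *: x + z) = a *: P x + P z) ->
  forall n (c : 'I_n -> R[i]) (y : 'I_n -> X),
  P (\sum_i c i *: y i) = \sum_i c i *: P (y i).
Proof.
move=> Pl; have P0 : P 0 = 0.
  have := Pl 1 0 0; rewrite scaler0 addr0 scale1r.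
  by move/(congr1 (fun t => t - P 0)); rewrite subrr addrK.
elim=> [|n IH] c y; first by rewrite !big_ord0.
by rewrite !big_ord_recl Pl IH.
Qed.

Lemma part1 (N : set (set X)) (J : set (X -> X)) : nest N -> bimodule N J ->
  J `<=` sot_closure (J `&` (@finite_rank R X)).
Proof.
move=> nN [Jb J0 Jl Jm] T JT; split; first exact: Jb.
move=> n x e e0.
have [m [y [ay Hc]]] := adapted_basis nN (fun k => T (x k)).
have [C HC] := choice Hc.
pose S := \sum_k \sum_i `|C k i|.
have S0 : 0 <= S by apply: sumr_ge0 => k _; apply: sumr_ge0 => i _.
have B0 : 0 < 1 + S by rewrite ltr_pwDl.
pose d := e / (1 + S).
have d0 : 0 < d by rewrite divr_gt0.
have [P [aP fP Py]] := approx_adapted nN d0 ay.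
have [[Pl Pc] _] := aP.
exists (P \o T); split.
  split; first by have [] := Jm P T aP JT.
  have [Tl Tc] := Jb T JT.
  split; first split.
  - by move=> a u v /=; rewrite Tl Pl.
  - by move=> u; apply: continuous_comp; [apply: Tc | apply: Pc].
  have [_ [k [v Hv]]] := fP; exists k, v => u; exact: Hv.
move=> k /=; rewrite HC lin_sum // -sumrB.
under eq_bigr do rewrite -scalerBr.
apply: (le_lt_trans (ler_norm_sum _ _ _)).
apply: (@le_lt_trans _ _ (\sum_i `|C k i| * d)).
  by apply: ler_sum => i _; rewrite normrZ ler_wpM2l // ltW.
rewrite -mulr_suml /d mulrA ltr_pdivrMr // mulrC ltr_pM2l //.
apply: (@le_lt_trans _ _ S); last by rewrite ltrDr ltr01.
by rewrite /S (bigD1 k) //= lerDl; apply: sumr_ge0 => ? _; apply: sumr_ge0.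
Qed.


Lemma part2 (S : set (X -> X)) : sot_closure S `<=` wot_closure S.
Proof.
move=> T [bT HT]; split => // n m x f e bf e0.
have H (p : 'I_n * 'I_m) : exists D : R[i], 0 < D /\ forall w,
    `|T (x p.1) - w| < D -> `|f p.2 (T (x p.1)) - f p.2 w| < e.
  have [_ fc] := bf p.2.
  have := fc (T (x p.1)); move=> /cvgrPdist_lt /(_ e e0) /nbhs_ballP [D D0 DB].
  exists D; split => // w Dw; apply: DB.
  by rewrite -ball_normE.
have [D HD] := choice H.
pose Sm := \sum_p (D p)^-1.
have Sm0 : 0 <= Sm by apply: sumr_ge0 => p _; rewrite invr_ge0 ltW //; case: (HD p).
pose d := (1 + Sm)^-1.
have d0 : 0 < d by rewrite invr_gt0 ltr_pwDl.
have [U [SU HU]] := HT n x d d0.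
exists U; split => // i j.
have [Dp HDp] := HD (i, j); apply: HDp.
apply: (lt_le_trans (HU i)).
rewrite /d -(invrK (D (i, j))) lef_pV2 ?posrE ?invr_gt0 ?ltr_pwDl //.
rewrite /Sm (bigD1 (i, j)) //= addrCA lerDl addr_ge0 //.
by apply: sumr_ge0 => p _; rewrite invr_ge0 ltW //; case: (HD p).
Qed.

End Main.

Theorem mainTheorem9 (R : realType) (X : completeNormedModType R[i])
  (N : set (set X)) (J : set (X -> X)) :
  nest N -> bimodule N J ->
  let J0 := J `&` (@finite_rank R X) in
  J `<=` sot_closure J0 /\ sot_closure J0 `<=` wot_closure J0.
Proof.
move=> nN bJ J0; split; first exact: (part1 nN bJ).
exact: (@part2 R X J0).
Qed.
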